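(* Let $\mu>0$, $\sigma>0$ with $\mu\ge\sqrt3\sigma$, and $\rho\in(0,1)$. Let $\omega$ be uniformly distributed on $\Omega=[\mu-\sqrt3\sigma,\mu+\sqrt3\sigma]$, let the real-time price be $p^{\omega,*}=\rho^{-1}\mathbf 1\{\omega\le\mu\}$ (faced by both participants), and let the electricity-market profits of the peaker plant $P$ (option seller) and wind producer $W$ (option buyer) be $$\pi_P^\omega=(\mu-\omega)^+(\rho^{-1}-1),\qquad \pi_W^\omega=\mu-(\mu-\omega)^+/\rho .$$ Let $\mathcal A_0=[0,1/\rho]\times[0,1/\rho]\times[0,\sqrt3\sigma]$, $\mathcal A_P=\{(q,K,\Delta)\in\mathcal A_0: K+2q\ge 1/\rho\}$ and $\mathcal A_W=\{(q,K,\Delta)\in\mathcal A_0:K+2q\le 1/\rho\}$. Consider the problem of minimizing $\mathrm{var}[\Pi_W^\omega]+\mathrm{var}[\Pi_P^\omega]$, where $$\Pi_W^\omega=\pi_W^\omega-q_W\Delta_W+(p^{\omega,*}-K_W)^+\Delta_W,\qquad \Pi_P^\omega=\pi_P^\omega+q_P\Delta_P-(p^{\omega,*}-K_P)^+\delta_P^\omega,$$ over $(q_W,K_W,\Delta_W)\in\mathcal A_W$, $(q_P,K_P,\Delta_P)\in\mathcal A_P$ and measurable $\delta_P:\Omega\to[0,\Delta_P]$, subject to $\Delta_P=\Delta_W$ and, almost surely, $\delta_P^\omega=\Delta_W\mathbf 1\{p^{\omega,*}\ge K_W\}$ and $$q_W\Delta_W-q_P\Delta_P-(p^{\omega,*}-K_W)^+\Delta_W+(p^{\omega,*}-K_P)^+\delta_P^\omega=0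 .$$ Then the optimal solutions are exactly those with $(q_W^*,K_W^*,\Delta_W^* )=(q_P^*,K_P^*,\Delta_P^* )=(q^*,K^*,\Delta^* )$ where $$\Delta^*\in\Big[\tfrac{\sqrt3\sigma(2-\rho)}{4},\ \sqrt3\sigma\Big],\qquad q^*=\frac{\sqrt3\sigma}{4\rho\Delta^*}-\frac{\sqrt3\sigma}{8\Delta^*},\qquad K^*=\frac1\rho\Big(\frac{2\Delta^*-\sqrt3\sigma}{2\Delta^*}\Big)+\frac{\sqrt3\sigma}{4\Delta^*}.$$ Moreover, $$\sum_{i\in\{W,P\}}\big(\mathrm{var}[\Pi_i^{\omega,*}]-\mathrm{var}[\pi_i^\omega]\big)=-\frac{3\sigma^2}{8}\Big(\rho^{-1}-\frac12\Big)^2<0 .$$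
   Context: $z^+:=\max\{z,0\}$; $\mathbf 1\{\cdot\}$ is an indicator. This is the centralized (market-maker) clearing of cash-settled call options (option price $q$, strike $K$, quantity $\Delta$, payoff $(p-K)^+$ per unit) between a wind producer and a peaker plant in a copperplate power system example (base-load generator with no ramping, peaker offering marginal cost $1/\rho$, zero-cost wind with available capacity $\omega$, demand $d\ge\mu+\sqrt3\sigma$), where both are risk-neutral; the acceptable sets $\mathcal A_P,\mathcal A_W$ are the risk-neutral acceptability sets in that example, and the last constraint says the market maker's merchandising surplus is zero in every scenario. *)

(* Defs.v *)
From HB Require Import structures.
From mathcomp Require Import all_boot all_order all_algebra.
From mathcomp Require Import all_classical all_reals all_analysis.
Set Implicit Arguments. Unset Strict Implicit. Unset Printing Implicit Defensive.
Import Order.TTheory GRing.Theory Num.Theory.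
Import numFieldNormedType.Exports.
Local Open Scope classical_set_scope.
Local Open Scope ring_scope.

Section Defs.
Variable R : realType.
Implicit Types (mu sigma rho : R) (x : R * R * R).

Definition pos (z : R) : R := Num.max z 0.

Definition s3 sigma : R := Num.sqrt 3 * sigma.

Definition Omega mu sigma : set R := `[mu - s3 sigma, mu + s3 sigma].

Definition price mu rho (w : R) : R := if w <= mu then rho^-1 else 0.

Definition profitP mu rho (w : R) : R := pos (mu - w) * (rho^-1 - 1).
Definition profitW mu rho (w : R) : R := mu - pos (mu - w) / rho.

Definition Exp mu sigma (f : R -> R) : R :=
  (2 * s3 sigma)^-1 * Rintegral (@lebesgue_measure R) (Omega mu sigma) f.
Definition Var mu sigma (f : R -> R) : R :=
  Exp mu sigma (fun w => (f w - Exp mu sigma f) ^+ 2).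

Definition qof x : R := x.1.1.
Definition Kof x : R := x.1.2.
Definition Dof x : R := x.2.

Definition A0 sigma rho x : Prop :=
  [/\ 0 <= qof x <= rho^-1, 0 <= Kof x <= rho^-1 & 0 <= Dof x <= s3 sigma].
Definition AP sigma rho x : Prop := A0 sigma rho x /\ rho^-1 <= Kof x + 2 * qof x.
Definition AW sigma rho x : Prop := A0 sigma rho x /\ Kof x + 2 * qof x <= rho^-1.

Definition PiW mu rho x (w : R) : R :=
  profitW mu rho w - qof x * Dof x + pos (price mu rho w - Kof x) * Dof x.
Definition PiP mu rho x (delta : R -> R) (w : R) : R :=
  profitP mu rho w + qof x * Dof x - pos (price mu rho w - Kof x) * delta w.

Definition Feasible mu sigma rho xW xP (delta : R -> R) : Prop :=
  [/\ AW sigma rho xW, AP sigma rho xP,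
      measurable_fun (Omega mu sigma) delta,
      (forall w, Omega mu sigma w -> 0 <= delta w <= Dof xP) &
      Dof xP = Dof xW] /\
  ({ae @lebesgue_measure R, forall w, Omega mu sigma w ->
         delta w = (if Kof xW <= price mu rho w then Dof xW else 0)} /\
   {ae @lebesgue_measure R, forall w, Omega mu sigma w ->
         qof xW * Dof xW - qof xP * Dof xP
         - pos (price mu rho w - Kof xW) * Dof xW
         + pos (price mu rho w - Kof xP) * delta w = 0}).

Definition Objective mu sigma rho xW xP (delta : R -> R) : R :=
  Var mu sigma (PiW mu rho xW) + Var mu sigma (PiP mu rho xP delta).

Definition Optimal mu sigma rho xW xP (delta : R -> R) : Prop :=
  Feasible mu sigma rho xW xP delta /\
  forall xW' xP' (delta' : R -> R), Feasible mu sigma rho xW' xP' delta' ->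
    Objective mu sigma rho xW xP delta <= Objective mu sigma rho xW' xP' delta'.

Definition qstar sigma rho (D : R) : R :=
  s3 sigma / (4 * rho * D) - s3 sigma / (8 * D).
Definition Kstar sigma rho (D : R) : R :=
  rho^-1 * ((2 * D - s3 sigma) / (2 * D)) + s3 sigma / (4 * D).
Definition xstar sigma rho (D : R) : R * R * R :=
  (qstar sigma rho D, Kstar sigma rho D, D).

End Defs.

(* Main.v *)
Require Import Defs.
From HB Require Import structures.
From mathcomp Require Import all_boot all_order all_algebra.
From mathcomp Require Import all_classical all_reals all_analysis.
From mathcomp Require Import ring lra measurable_realfun.
Import Order.TTheory GRing.Theory Num.Theory.
Import numFieldNormedType.Exports.
Local Open Scope classical_set_scope.
Local Open Scope ring_scope.
Definition Xf {R : realType} (m : R) : R -> R := fun w => if w <= m then 1 else 0.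
Definition Yf {R : realType} (m : R) : R -> R := fun w => pos (m - w).

Lemma s3_gt0 {R : realType} {sg : R} : 0 < sg -> 0 < s3 sg.
Proof. by move=> h; rewrite /s3 mulr_gt0 // sqrtr_gt0 ltr0n. Qed.

Lemma mOmega {R : realType} (m sg : R) : measurable (Omega m sg).
Proof. exact: measurable_itv. Qed.

Lemma muOmega {R : realType} (m sg : R) : 0 < sg ->
  (@lebesgue_measure R) (Omega m sg) = (2 * s3 sg)%:E.
Proof.
move=> h; have := s3_gt0 h => hs.
rewrite /Omega lebesgue_measure_itv /= lte_fin ifT; last by lra.
by rewrite -EFinD; congr EFin; lra.
Qed.

Lemma mXf {R : realType} (m : R) : measurable_fun setT (Xf m).
Proof.
apply: measurable_fun_ifT => //.
exact: measurable_fun_ler.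
Qed.

Lemma mYf {R : realType} (m : R) : measurable_fun setT (Yf m).
Proof.
apply: measurable_maxr => //.
exact: measurable_funB.
Qed.

Notation LL := (@lebesgue_measure _).

Lemma int_bd {R : realType} (m sg : R) (f : R -> R) (B : R) : 0 < sg ->
  measurable_fun setT f -> (forall w, Omega m sg w -> `|f w| <= B) ->
  (@lebesgue_measure R).-integrable (Omega m sg) (EFin \o f).
Proof.
move=> hs mf hb; apply: measurable_bounded_integrable.
- exact: mOmega.
- have H := muOmega m sg hs.
  exact: (eq_ind_r (fun z => (z < +oo)%E) (ltry _) H).
- exact: measurable_funTS.
- exists B; split; first exact: num_real.
  move=> M BM x Ax /=; apply: le_trans (hb x Ax) _; exact: ltW.
Qed.

Lemma iD {R : realType} (m sg : R) (f g : R -> R) :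
  (@lebesgue_measure R).-integrable (Omega m sg) (EFin \o f) ->
  (@lebesgue_measure R).-integrable (Omega m sg) (EFin \o g) ->
  (@lebesgue_measure R).-integrable (Omega m sg) (EFin \o (fun x => f x + g x)).
Proof.
move=> hf hg.
have mO : @measurable _ (measurableTypeR R) (Omega m sg) := measurable_itv _.
have h := integrableD mO hf hg.
by apply: eq_integrable h.
Qed.

Lemma iZ {R : realType} (m sg : R) (k : R) (f : R -> R) :
  (@lebesgue_measure R).-integrable (Omega m sg) (EFin \o f) ->
  (@lebesgue_measure R).-integrable (Omega m sg) (EFin \o (fun x => k * f x)).
Proof.
move=> hf.
have mO : @measurable _ (measurableTypeR R) (Omega m sg) := measurable_itv _.
have h := integrableZl mO k hf.
by apply: eq_integrable h.
Qed.

Lemma mOL {R : realType} (m sg : R) : @measurable _ (measurableTypeR R) (Omega m sg).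
Proof. exact: measurable_itv. Qed.

Lemma posE {R : realType} (z : R) : pos z = if 0 <= z then z else 0.
Proof. rewrite /pos; case: ifPn => h; [by rewrite max_l | by rewrite max_r // ltW // ltNge]. Qed.

Lemma OmegaE {R : realType} (m sg w : R) : Omega m sg w <-> m - s3 sg <= w <= m + s3 sg.
Proof. by rewrite /Omega /= in_itv /=. Qed.

Lemma Y_bd {R : realType} {m sg w : R} : 0 < sg -> Omega m sg w -> 0 <= Yf m w <= 2 * s3 sg.
Proof.
move=> hs /OmegaE /andP[h1 h2]; have := s3_gt0 hs => h.
rewrite /Yf posE; case: ifPn => hh; apply/andP; split; lra.
Qed.

Lemma iY {R : realType} (m sg : R) : 0 < sg ->
  (@lebesgue_measure R).-integrable (Omega m sg) (EFin \o Yf m).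
Proof.
move=> hs; apply: (@int_bd _ m sg _ (2 * s3 sg)) => //; first exact: mYf.
move=> w hw; have /andP[h1 h2] := Y_bd hs hw; rewrite ger0_norm //.
Qed.

Lemma iY2 {R : realType} (m sg : R) : 0 < sg ->
  (@lebesgue_measure R).-integrable (Omega m sg) (EFin \o (fun w => Yf m w ^+ 2)).
Proof.
move=> hs; apply: (@int_bd _ m sg _ ((2 * s3 sg) ^+ 2)) => //.
  by apply: measurable_funX; exact: mYf.
move=> w hw; have /andP[h1 h2] := Y_bd hs hw; rewrite ger0_norm ?exprn_ge0 //.
by rewrite lerXn2r // ?nnegrE //; apply: le_trans h2.
Qed.

Lemma iX {R : realType} (m sg : R) : 0 < sg ->
  (@lebesgue_measure R).-integrable (Omega m sg) (EFin \o Xf m).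
Proof.
move=> hs; apply: (@int_bd _ m sg _ (1)) => //; first exact: mXf.
by move=> w hw; rewrite /Xf; case: ifPn; rewrite ?normr1 ?normr0.
Qed.

Lemma iC {R : realType} (m sg a : R) : 0 < sg ->
  (@lebesgue_measure R).-integrable (Omega m sg) (EFin \o (fun _ => a)).
Proof.
move=> hs; apply: (@int_bd _ m sg _ (`|a|)) => //.
Qed.

Lemma RintC {R : realType} (m sg a : R) : 0 < sg ->
  Rintegral (@lebesgue_measure R) (Omega m sg) (fun _ => a) = a * (2 * s3 sg).
Proof.
move=> hs; rewrite Rintegral_cst; last exact: mOL.
have H := muOmega m sg hs.
by rewrite [X in fine X]H.
Qed.

Lemma Exp_lin {R : realType} (m sg a b c d : R) : 0 < sg ->
  Exp m sg (fun w => a + b * Yf m w + c * Yf m w ^+ 2 + d * Xf m w) =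
  a + b * Exp m sg (Yf m) + c * Exp m sg (fun w => Yf m w ^+ 2) + d * Exp m sg (Xf m).
Proof.
move=> hs; have := s3_gt0 hs => h.
rewrite /Exp.
rewrite RintegralD; [|exact: mOL| |]; last first.
  - exact: iZ (iX _ _ hs).
  - apply: iD; last exact: iZ (iY2 _ _ hs).
    apply: iD; [exact: iC | exact: iZ (iY _ _ hs)].
rewrite RintegralD; [|exact: mOL| |]; last first.
  - exact: iZ (iY2 _ _ hs).
  - apply: iD; [exact: iC | exact: iZ (iY _ _ hs)].
rewrite RintegralD; [|exact: mOL| exact: iC | exact: iZ (iY _ _ hs)].
rewrite !RintegralZl; try exact: mOL; try exact: iY; try exact: iY2; try exact: iX.
rewrite RintC //.
field; lra.
Qed.

Definition FF {R : realType} (m : R) : R -> R := m \*: (@id R) - 2^-1 \*: ((@id R) ^+ 2).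

Lemma FFE (R : realType) (m x : R) : FF m x = m * x - 2^-1 * x ^+ 2.
Proof. by rewrite /FF /= !fctE /=. Qed.

Lemma dF (R : realType) (m x : R) : is_derive x 1 (FF m) (m - x).
Proof.
have H := is_deriveB (is_deriveZ m (is_derive_id x (1:R))) (is_deriveZ (2^-1:R) (is_deriveX 2 (is_derive_id x (1:R)))).
rewrite /FF; move: H.
have -> : m *: (1:R) - 2^-1 *: ((2%:R * (@id R) x ^+ 2.-1) *: (1:R)) = m - x.
  rewrite /= expr1 !scalerA /GRing.scale /= !mulr1 mulrA mulVf ?mul1r // pnatr_eq0.
by [].
Qed.

Lemma FTC_lin (R : realType) (m a : R) : a < m ->
  Rintegral (@lebesgue_measure R) `[a, m] (fun w : R => m - w) = (m - a) ^+ 2 / 2.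
Proof.
move=> am.
have dF' : forall x, derivable (FF m) x 1 /\ derive1 (FF m) x = m - x.
  move=> x; split; first by case: (@dF _ m x).
  by rewrite derive1E; apply: derive_val; exact: (@dF _ m x).
have cF : continuous (FF m).
  move=> x; apply: differentiable_continuous.
  exact/derivable1_diffP/(dF' x).1.
have cl : continuous (fun w : R => m - w).
  by move=> x; apply: continuousB; [exact: cst_continuous| exact: cvg_id].
rewrite /Rintegral (@continuous_FTC2 _ _ (FF m)) //.
- by rewrite !FFE /=; field.
- by apply: continuous_in_subspaceT => x _; exact: cl.
- split.
  + by move=> x _; exact: (dF' x).1.
  + exact: cvg_at_right_filter (cF a).
  + exact: cvg_at_left_filter (cF m).
- by move=> x _; rewrite (dF' x).2.
Qed.

Lemma split_int {R : realType} (m sg : R) (f : R -> R) : 0 < sg ->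
  (@lebesgue_measure R).-integrable (Omega m sg) (EFin \o f) ->
  (forall w, m < w -> f w = 0) ->
  Rintegral (@lebesgue_measure R) (Omega m sg) f =
  Rintegral (@lebesgue_measure R) `[m - s3 sg, m] f.
Proof.
move=> hs hi hz; have := s3_gt0 hs => h.
have := @Rintegral_itvB R f (BLeft (m - s3 sg)) (BRight (m + s3 sg)) m hi.
rewrite !bnd_simp => H.
have {}H := H ltac:(lra) ltac:(lra).
have E0 : Rintegral (@lebesgue_measure R) `]m, m + s3 sg] f = 0.
  rewrite (@eq_Rintegral _ _ _ (@lebesgue_measure R) _ (fun _ => 0) f); last first.
    by move=> w; rewrite inE /= in_itv /= => /andP[hw _]; rewrite hz.
  by rewrite Rintegral_cst ?mul0r //; exact: measurable_itv.
rewrite E0 in H.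
by apply/eqP; rewrite -subr_eq0; apply/eqP.
Qed.

Lemma EX_val {R : realType} (m sg : R) : 0 < sg -> Exp m sg (Xf m) = 1 / 2.
Proof.
move=> hs; have := s3_gt0 hs => h.
rewrite /Exp split_int //; last first.
- by move=> w hw; rewrite /Xf ifF //; apply/negbTE; rewrite -ltNge.
- exact: iX.
rewrite (@eq_Rintegral _ _ _ (@lebesgue_measure R) _ (fun _ => 1) (Xf m)); last first.
  by move=> w; rewrite inE /= in_itv /= => /andP[_ hw]; rewrite /Xf hw.
rewrite Rintegral_cst; last exact: measurable_itv.
have H := @lebesgue_measure_itv R `[m - s3 sg, m].
rewrite [X in fine X]H /= lte_fin ifT; last by lra.
rewrite /=; field; lra.
Qed.

Lemma EY_val {R : realType} (m sg : R) : 0 < sg -> Exp m sg (Yf m) = s3 sg / 4.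
Proof.
move=> hs; have := s3_gt0 hs => h.
rewrite /Exp split_int //; last first.
- by move=> w hw; rewrite /Yf posE ifF //; apply/negbTE; rewrite -ltNge; lra.
- exact: iY.
rewrite (@eq_Rintegral _ _ _ (@lebesgue_measure R) _ (fun w => m - w) (Yf m)); last first.
  by move=> w; rewrite inE /= in_itv /= => /andP[_ hw]; rewrite /Yf posE ifT //; lra.
rewrite FTC_lin; last by lra.
field; lra.
Qed.

Lemma ae_mono {R : realType} (P Q : R -> Prop) : (forall w, P w -> Q w) ->
  {ae @lebesgue_measure R, forall w, P w} -> {ae @lebesgue_measure R, forall w, Q w}.
Proof.
move=> PQ H.
have F := @ae_filter_ringOfSetsType _ (measurableTypeR R) R (@lebesgue_measure R).
exact: (@filterS _ _ F _ _ PQ H).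
Qed.

Lemma ae_and {R : realType} (P Q : R -> Prop) :
  {ae @lebesgue_measure R, forall w, P w} -> {ae @lebesgue_measure R, forall w, Q w} ->
  {ae @lebesgue_measure R, forall w, P w /\ Q w}.
Proof.
move=> HP HQ.
have F := @ae_filter_ringOfSetsType _ (measurableTypeR R) R (@lebesgue_measure R).
exact: (@filterI _ _ F _ _ HP HQ).
Qed.

Lemma Exp_ae {R : realType} (m sg : R) (f g : R -> R) :
  measurable_fun (Omega m sg) f -> measurable_fun (Omega m sg) g ->
  {ae @lebesgue_measure R, forall w, Omega m sg w -> f w = g w} ->
  Exp m sg f = Exp m sg g.
Proof.
move=> mf mg H; rewrite /Exp /Rintegral; congr (_ * fine _).
apply: ae_eq_integral.
- exact: mOL.
- exact/measurable_EFinP.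
- exact/measurable_EFinP.
- by apply: ae_mono H => w hw Ow; rewrite hw.
Qed.

Lemma mg_lin {R : realType} (m u v c : R) :
  measurable_fun setT (fun w => u + v * Yf m w + c * Xf m w).
Proof.
apply: measurable_funD; [apply: measurable_funD|].
- exact: measurable_cst.
- apply: measurable_funM; [exact: measurable_cst | exact: mYf].
- apply: measurable_funM; [exact: measurable_cst | exact: mXf].
Qed.

Lemma Var_lin {R : realType} (m sg : R) (f : R -> R) (u v c : R) : 0 < sg ->
  measurable_fun (Omega m sg) f ->
  {ae @lebesgue_measure R, forall w, Omega m sg w -> f w = u + v * Yf m w + c * Xf m w} ->
  Var m sg f = v ^+ 2 * (Exp m sg (fun w => Yf m w ^+ 2) - (Exp m sg (Yf m)) ^+ 2)
     + 2 * v * c * (Exp m sg (Yf m) - Exp m sg (Xf m) * Exp m sg (Yf m))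
     + c ^+ 2 * (Exp m sg (Xf m) - Exp m sg (Xf m) ^+ 2).
Proof.
move=> hs mf H.
set g := fun w => u + v * Yf m w + c * Xf m w.
have mg : measurable_fun (Omega m sg) g by exact: measurable_funTS (mg_lin m u v c).
have E1 : Exp m sg f = Exp m sg g by exact: Exp_ae.
have E2 : Exp m sg g = u + v * Exp m sg (Yf m) + c * Exp m sg (Xf m).
  have -> : g = (fun w => u + v * Yf m w + 0 * Yf m w ^+ 2 + c * Xf m w).
    by apply: funext => w; rewrite /g mul0r addr0.
  by rewrite Exp_lin // mul0r addr0.
rewrite /Var E1.
set M := Exp m sg g.
have E3 : Exp m sg (fun w => (f w - M) ^+ 2) = Exp m sg (fun w => (g w - M) ^+ 2).
  apply: Exp_ae.
  - apply: measurable_funX; apply: measurable_funB => //; exact: measurable_cst.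
  - apply: measurable_funX; apply: measurable_funB => //; exact: measurable_cst.
  - by apply: ae_mono H => w hw Ow; rewrite hw.
rewrite E3.
have -> : (fun w => (g w - M) ^+ 2) = (fun w => (u - M) ^+ 2 + (2 * (u - M) * v + 2 * v * c) * Yf m w
     + v ^+ 2 * Yf m w ^+ 2 + (2 * (u - M) * c + c ^+ 2) * Xf m w).
  apply: funext => w; rewrite /g /Xf /Yf posE subr_ge0.
  have [hw|hw] := leP w m.
    ring.
  ring.
rewrite Exp_lin // /M E2.
ring.
Qed.

Definition VYt {R : realType} (m sg : R) := Exp m sg (fun w => Yf m w ^+ 2) - (Exp m sg (Yf m)) ^+ 2.

Lemma Var_spec {R : realType} (m sg : R) (f : R -> R) (u v c : R) : 0 < sg ->
  measurable_fun (Omega m sg) f ->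
  {ae @lebesgue_measure R, forall w, Omega m sg w -> f w = u + v * Yf m w + c * Xf m w} ->
  Var m sg f = v ^+ 2 * VYt m sg + v * c * (s3 sg / 4) + c ^+ 2 / 4.
Proof.
move=> hs mf H; rewrite (Var_lin _ _ _ _ _ _ hs mf H) EX_val // EY_val // /VYt EY_val //.
by field.
Qed.

Lemma mpos {R : realType} (f : R -> R) : measurable_fun setT f ->
  measurable_fun setT (fun w => pos (f w)).
Proof. by move=> mf; apply: measurable_maxr. Qed.

Lemma mprice {R : realType} (m rho : R) : measurable_fun setT (price m rho).
Proof. by apply: measurable_fun_ifT => //; exact: measurable_fun_ler. Qed.

Lemma pos_price {R : realType} (m rho K D : R) (w : R) : 0 <= K <= rho^-1 ->
  pos (price m rho w - K) * D = (rho^-1 - K) * D * Xf m w.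
Proof.
move=> /andP[h1 h2]; rewrite /price /Xf; have [hw|hw] := leP w m; rewrite posE.
  by rewrite subr_ge0 h2 mulr1.
rewrite mulr0 sub0r; case: ifPn => hk; last ring.
have -> : K = 0 by lra.
ring.
Qed.

Lemma profitW_E {R : realType} (m rho : R) :
  profitW m rho = fun w => m + (- rho^-1) * Yf m w + 0 * Xf m w.
Proof. by apply: funext => w; rewrite /profitW /Yf; ring. Qed.

Lemma profitP_E {R : realType} (m rho : R) :
  profitP m rho = fun w => 0 + (rho^-1 - 1) * Yf m w + 0 * Xf m w.
Proof. by apply: funext => w; rewrite /profitP /Yf; ring. Qed.

Lemma PiW_E {R : realType} (m sg rho : R) (x : R * R * R) : A0 sg rho x ->
  PiW m rho x = fun w => (m - qof x * Dof x) + (- rho^-1) * Yf m w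
                        + ((rho^-1 - Kof x) * Dof x) * Xf m w.
Proof.
move=> [_ hK _]; apply: funext => w; rewrite /PiW pos_price // /profitW /Yf; ring.
Qed.

Lemma mPiP {R : realType} (m sg rho : R) (xP : R * R * R) (d : R -> R) :
  measurable_fun (Omega m sg) d -> measurable_fun (Omega m sg) (PiP m rho xP d).
Proof.
move=> md; apply: measurable_funB.
  apply: measurable_funTS; apply: measurable_funD; last exact: measurable_cst.
  rewrite profitP_E.
  exact: mg_lin.
apply: measurable_funM => //.
apply: measurable_funTS; apply: mpos; apply: measurable_funB; last exact: measurable_cst.
exact: mprice.
Qed.

Lemma PiP_ae {R : realType} (m sg rho : R) xW xP (d : R -> R) :
  Feasible m sg rho xW xP d ->
  {ae @lebesgue_measure R, forall w, Omega m sg w ->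
     PiP m rho xP d w = qof xW * Dof xW + (rho^-1 - 1) * Yf m w
                        + (- ((rho^-1 - Kof xW) * Dof xW)) * Xf m w}.
Proof.
move=> [[[hW _] _ _ _ _] [_ Hm]].
apply: ae_mono Hm => w hw Ow; have := hw Ow.
rewrite /PiP pos_price; last by case: hW.
rewrite (_ : profitP m rho w = 0 + (rho^-1 - 1) * Yf m w + 0 * Xf m w); last by rewrite profitP_E.
move=> H.
have -> : pos (price m rho w - Kof xP) * d w =
   (rho^-1 - Kof xW) * Dof xW * Xf m w - qof xW * Dof xW + qof xP * Dof xP.
  by rewrite -[LHS]subr0 -H; ring.
ring.
Qed.

Lemma ae_all {R : realType} (P : R -> Prop) : (forall w, P w) ->
  {ae @lebesgue_measure R, forall w, P w}.
Proof. by move=> H; apply: aeW. Qed.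

Definition hh {R : realType} (sg rho c : R) := c ^+ 2 / 2 - (2 * rho^-1 - 1) * c * (s3 sg / 4).

Lemma diff_eq {R : realType} (m sg rho : R) xW xP (d : R -> R) : 0 < sg ->
  Feasible m sg rho xW xP d ->
  (Var m sg (PiW m rho xW) - Var m sg (profitW m rho))
  + (Var m sg (PiP m rho xP d) - Var m sg (profitP m rho))
  = hh sg rho ((rho^-1 - Kof xW) * Dof xW).
Proof.
move=> hs F; have F' := F; move: F' => [[[hW _] _ md _ _] _].
set c := (rho^-1 - Kof xW) * Dof xW.
have E1 : Var m sg (PiW m rho xW) = (- rho^-1) ^+ 2 * VYt m sg + (- rho^-1) * c * (s3 sg / 4) + c ^+ 2 / 4.
  apply: (Var_spec _ _ _ (m - qof xW * Dof xW)) => //.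
    by rewrite (PiW_E _ _ _ _ hW); apply: measurable_funTS; exact: mg_lin.
  by apply: ae_all => w _; rewrite (PiW_E _ _ _ _ hW).
have E2 : Var m sg (profitW m rho) = (- rho^-1) ^+ 2 * VYt m sg + (- rho^-1) * 0 * (s3 sg / 4) + 0 ^+ 2 / 4.
  apply: (Var_spec _ _ _ m) => //.
    by rewrite profitW_E; apply: measurable_funTS; exact: mg_lin.
  by apply: ae_all => w _; rewrite profitW_E.
have E3 : Var m sg (PiP m rho xP d) = (rho^-1 - 1) ^+ 2 * VYt m sg + (rho^-1 - 1) * (- c) * (s3 sg / 4) + (- c) ^+ 2 / 4.
  apply: (Var_spec _ _ _ (qof xW * Dof xW)) => //.
    exact: mPiP.
  exact: PiP_ae F.
have E4 : Var m sg (profitP m rho) = (rho^-1 - 1) ^+ 2 * VYt m sg + (rho^-1 - 1) * 0 * (s3 sg / 4) + 0 ^+ 2 / 4.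
  apply: (Var_spec _ _ _ 0) => //.
    by rewrite profitP_E; apply: measurable_funTS; exact: mg_lin.
  by apply: ae_all => w _; rewrite profitP_E.
rewrite E1 E2 E3 E4 /hh; clearbody c; move: (rho^-1) => r; by field.
Qed.

Lemma ae_pt {R : realType} (A : set R) (P : R -> Prop) (m sg : R) :
  @measurable _ (measurableTypeR R) A -> (0 < (@lebesgue_measure R) A)%E ->
  A `<=` Omega m sg ->
  {ae @lebesgue_measure R, forall w, Omega m sg w -> P w} ->
  exists w, A w /\ P w.
Proof.
move=> mA A0 AO H.
apply: contrapT => nE.
case: H => N [mN N0 HN].
have nA : (@lebesgue_measure R).-negligible A.
  exists N; split => // w Aw; apply: HN => /= hP.
  by apply: nE; exists w; split => //; apply: hP; exact: AO.
have := measure_negligible mA nA.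
by move=> h; move: A0; rewrite h ltxx.
Qed.

Lemma ae_two {R : realType} (P : R -> Prop) (m sg : R) : 0 < sg ->
  {ae @lebesgue_measure R, forall w, Omega m sg w -> P w} ->
  (exists w, m - s3 sg <= w <= m /\ P w) /\ (exists w, m < w <= m + s3 sg /\ P w).
Proof.
move=> hs H; have := s3_gt0 hs => h; split.
- have m1 : (0 < (@lebesgue_measure R) (`[(m - s3 sg)%R, m]%classic : set R))%E.
    rewrite lebesgue_measure_itv /= lte_fin ifT; last by lra.
    by rewrite -EFinD lte_fin; lra.
  have s1 : `[m - s3 sg, m] `<=` Omega m sg.
    by move=> w; rewrite /Omega /= !in_itv /= => /andP[h1 h2]; apply/andP; split; lra.
  have [w [Aw Pw]] := @ae_pt R `[m - s3 sg, m] P m sg (measurable_itv _) m1 s1 H.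
  by exists w; split => //; move: Aw; rewrite /= in_itv.
- have m1 : (0 < (@lebesgue_measure R) (`]m, (m + s3 sg)%R]%classic : set R))%E.
    rewrite lebesgue_measure_itv /= lte_fin ifT; last by lra.
    by rewrite -EFinD lte_fin; lra.
  have s1 : `]m, m + s3 sg] `<=` Omega m sg.
    by move=> w; rewrite /Omega /= !in_itv /= => /andP[h1 h2]; apply/andP; split; lra.
  have [w [Aw Pw]] := @ae_pt R `]m, m + s3 sg] P m sg (measurable_itv _) m1 s1 H.
  by exists w; split => //; move: Aw; rewrite /= in_itv.
Qed.

Definition kk {R : realType} (sg rho : R) := (2 * rho^-1 - 1) * (s3 sg / 4).

Lemma hh_min {R : realType} (sg rho c : R) :
  hh sg rho c - hh sg rho (kk sg rho) = (c - kk sg rho) ^+ 2 / 2.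
Proof. by rewrite /hh /kk; move: (rho^-1) (s3 sg) => r S; field. Qed.

Lemma xstar_props {R : realType} (sg rho D : R) : 0 < sg -> 0 < rho < 1 ->
  s3 sg * (2 - rho) / 4 <= D <= s3 sg ->
  [/\ AW sg rho (xstar sg rho D), AP sg rho (xstar sg rho D)
    & (rho^-1 - Kstar sg rho D) * D = kk sg rho].
Proof.
move=> hs /andP[r0 r1] /andP[D1 D2].
have h := s3_gt0 hs.
set c0 := s3 sg * (2 - rho) / 4.
have c0p : 0 < c0 by rewrite /c0; apply: divr_gt0 => //; apply: mulr_gt0 => //; lra.
have Dp : 0 < D by exact: lt_le_trans c0p D1.
set u := c0 / D.
have u0 : 0 < u by exact: divr_gt0.
have u1 : u <= 1 by rewrite /u ler_pdivrMr // mul1r.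
have rp : 0 < rho^-1 by rewrite invr_gt0.
have rn : rho != 0 by rewrite gt_eqF.
have Dn : D != 0 by rewrite gt_eqF.
have qE : qstar sg rho D = u * rho^-1 / 2.
  by rewrite /qstar /u /c0; field; rewrite Dn rn.
have KE : Kstar sg rho D = (1 - u) * rho^-1.
  by rewrite /Kstar /u /c0; field; rewrite Dn rn.
have A : A0 sg rho (xstar sg rho D).
  have ur : 0 < u * rho^-1 by exact: mulr_gt0.
  have ur1 : u * rho^-1 <= rho^-1 by rewrite ler_piMl // ltW.
  rewrite /A0 /qof /Kof /Dof /= qE KE; split; apply/andP; split; lra.
have sum : Kstar sg rho D + 2 * qstar sg rho D = rho^-1 by rewrite qE KE; move: (rho^-1) => r; field.
split.
- by split => //; rewrite /Kof /qof /= sum.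
- by split => //; rewrite /Kof /qof /= sum.
- rewrite KE /u /c0 /kk; field; by rewrite Dn rn.
Qed.

Lemma feas_star {R : realType} (m sg rho D : R) (d : R -> R) : 0 < sg -> 0 < rho < 1 ->
  s3 sg * (2 - rho) / 4 <= D <= s3 sg ->
  measurable_fun (Omega m sg) d -> (forall w, Omega m sg w -> 0 <= d w <= D) ->
  {ae @lebesgue_measure R, forall w, Omega m sg w ->
     d w = (if Kstar sg rho D <= price m rho w then D else 0)} ->
  Feasible m sg rho (xstar sg rho D) (xstar sg rho D) d.
Proof.
move=> hs hr hD md hb H.
have [hW hP _] := xstar_props _ _ _ hs hr hD.
split; first by split.
split; first exact: H.
apply: ae_mono H => w hw Ow; rewrite (hw Ow) /qof /Kof /Dof /=.
case: ifPn => hK; first ring.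
rewrite posE ifF; first ring.
by apply/negbTE; rewrite subr_ge0.
Qed.

Lemma obj_eq {R : realType} (m sg rho : R) xW xP (d : R -> R) : 0 < sg ->
  Feasible m sg rho xW xP d ->
  Objective m sg rho xW xP d =
  (Var m sg (profitW m rho) + Var m sg (profitP m rho)) + hh sg rho ((rho^-1 - Kof xW) * Dof xW).
Proof.
move=> hs F; have := diff_eq _ _ _ _ _ _ hs F; rewrite /Objective.
move: (Var m sg (PiW m rho xW)) (Var m sg (profitW m rho)) (Var m sg (PiP m rho xP d))
  (Var m sg (profitP m rho)) (hh sg rho ((rho^-1 - Kof xW) * Dof xW)) => a b c e f E.
by rewrite -E; ring.
Qed.

Lemma opt_c {R : realType} (m sg rho : R) xW xP (d : R -> R) : 0 < sg -> 0 < rho < 1 ->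
  Optimal m sg rho xW xP d -> (rho^-1 - Kof xW) * Dof xW = kk sg rho.
Proof.
move=> hs hr [F Hmin].
have h := s3_gt0 hs.
have /andP[r0 r1] := hr.
have hD0 : s3 sg * (2 - rho) / 4 <= s3 sg <= s3 sg.
  rewrite lexx andbT ler_pdivrMr // ler_pM2l //; lra.
have [_ _ ck] := xstar_props _ _ _ hs hr hD0.
have KE : Kstar sg rho (s3 sg) = (2 + rho) / (4 * rho).
  by rewrite /Kstar; field; rewrite !gt_eqF.
have Kp : 0 < Kstar sg rho (s3 sg) by rewrite KE divr_gt0 //; lra.
have Kr : Kstar sg rho (s3 sg) <= rho^-1.
  rewrite KE.
  have -> : (2 + rho) / (4 * rho) = rho^-1 * ((2 + rho) / 4).
    by field; rewrite gt_eqF.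
  rewrite ler_piMr ?invr_ge0 ?ltW //.
  by rewrite ltr_pdivrMr //; lra.
pose d0 := fun w => s3 sg * Xf m w.
have md0 : measurable_fun (Omega m sg) d0.
  apply: measurable_funTS; apply: measurable_funM; [exact: measurable_cst | exact: mXf].
have hb0 : forall w, Omega m sg w -> 0 <= d0 w <= s3 sg.
  by move=> w _; rewrite /d0 /Xf; case: ifPn => _; rewrite ?mulr1 ?mulr0 lexx ?ltW.
have hae0 : {ae @lebesgue_measure R, forall w, Omega m sg w ->
     d0 w = (if Kstar sg rho (s3 sg) <= price m rho w then s3 sg else 0)}.
  apply: ae_all => w _; rewrite /d0 /Xf /price.
  case: ifPn => hw; first by rewrite Kr mulr1.
  by rewrite mulr0 ifF //; apply/negbTE; rewrite -ltNge.
have F0 := feas_star _ _ _ _ _ hs hr hD0 md0 hb0 hae0.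
have := Hmin _ _ _ F0.
rewrite (obj_eq _ _ _ _ _ _ hs F) (obj_eq _ _ _ _ _ _ hs F0) /Kof /Dof /= ck => hle.
have := hh_min sg rho ((rho^-1 - Kof xW) * Dof xW).
move: hle; rewrite /Kof /Dof.
set c := (rho^-1 - xW.1.2) * xW.2 => hle hm.
have H : (c - kk sg rho) ^+ 2 <= 0 by lra.
have : (c - kk sg rho) ^+ 2 == 0 by rewrite eq_le H sqr_ge0.
by rewrite sqrf_eq0 subr_eq0 => /eqP.
Qed.

Lemma opt_star {R : realType} (m sg rho : R) xW xP (d : R -> R) : 0 < sg -> 0 < rho < 1 ->
  Optimal m sg rho xW xP d ->
  exists D : R,
    [/\ Num.sqrt 3 * sg * (2 - rho) / 4 <= D <= Num.sqrt 3 * sg,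
        xW = xstar sg rho D /\ xP = xstar sg rho D,
        measurable_fun (Omega m sg) d,
        (forall w, Omega m sg w -> 0 <= d w <= D) &
        {ae @lebesgue_measure R, forall w, Omega m sg w ->
           d w = (if Kstar sg rho D <= price m rho w then D else 0)}].
Proof.
move=> hs hr O.
have ck := opt_c _ _ _ _ _ _ hs hr O.
have h := s3_gt0 hs.
have /andP[r0 r1] := hr.
have rn : rho != 0 by rewrite gt_eqF.
have rg1 : 1 < rho^-1 by rewrite invf_gt1.
have kp : 0 < kk sg rho by rewrite /kk mulr_gt0 //; [lra | exact: divr_gt0].
case: O => [[[hW hP md hb hD] [H1 H2]] _].
move: xW xP hW hP hb hD H1 H2 ck => [[qW KW] DW] [[qP KP] DP].
rewrite /AW /AP /A0 /qof /Kof /Dof /= => -[[/andP[q1 q2] /andP[K1 K2] /andP[D1 D2]] sW].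
move=> -[[/andP[q1' q2'] /andP[K1' K2'] /andP[D1' D2']] sP] hb hD H1 H2 ck.
subst DP.
have DWn : DW != 0 by apply/negP => /eqP E; move: ck; rewrite E mulr0 => E'; move: kp; rewrite -E' ltxx.
have H12 : {ae @lebesgue_measure R, forall w, Omega m sg w ->
   (d w = (if KW <= price m rho w then DW else 0)) /\
   (qW * DW - qP * DW - pos (price m rho w - KW) * DW + pos (price m rho w - KP) * d w = 0)}.
  by apply: ae_mono (ae_and _ _ H1 H2) => w [a b] Ow; split; [exact: a Ow | exact: b Ow].
have [[w1 [hw1 [e1 e2]]] [w2 [hw2 [f1 f2]]]] := ae_two _ m sg hs H12.
have X1 : Xf m w1 = 1 by rewrite /Xf; case/andP: hw1 => _ ->.
have X2 : Xf m w2 = 0 by rewrite /Xf ifF //; apply/negbTE; rewrite -ltNge; case/andP: hw2.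
have p1 : price m rho w1 = rho^-1 by rewrite /price; case/andP: hw1 => _ ->.
rewrite !pos_price ?K1 ?K2 ?K1' ?K2' // in e2 f2.
rewrite X2 !mulr0 subr0 addr0 in f2.
have eq : qW = qP.
  have : (qW - qP) * DW = 0 by rewrite mulrBl.
  by move/eqP; rewrite mulf_eq0 (negbTE DWn) orbF subr_eq0 => /eqP.
subst qP.
rewrite e1 p1 K2 X1 !mulr1 in e2.
have eK : KW = KP.
  have : (KW - KP) * DW = 0 by rewrite -[RHS]e2; ring.
  by move/eqP; rewrite mulf_eq0 (negbTE DWn) orbF subr_eq0 => /eqP.
subst KP.
have sum : KW + 2 * qW = rho^-1 by lra.
have eK : Kstar sg rho DW = KW.
  have -> : Kstar sg rho DW = rho^-1 - kk sg rho / DW.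
    by rewrite /Kstar /kk; field; rewrite DWn rn.
  by rewrite -ck; field; rewrite ?DWn ?rn.
have eQ : qstar sg rho DW = qW.
  have -> : qstar sg rho DW = kk sg rho / (2 * DW).
    by rewrite /qstar /kk; field; rewrite DWn rn.
  have -> : qW = (rho^-1 - KW) / 2 by lra.
  by rewrite -ck; field; rewrite ?DWn ?rn.
exists DW; split => //.
- rewrite D2 andbT.
  have KD : 0 <= KW * DW by exact: mulr_ge0.
  have kD : kk sg rho <= rho^-1 * DW by rewrite -ck; lra.
  have -> : Num.sqrt 3 * sg * (2 - rho) / 4 = rho * kk sg rho.
    by rewrite /kk /s3; field.
  have -> : DW = rho * (rho^-1 * DW) by rewrite mulrA mulfV // mul1r.
  by rewrite ler_pM2l.
- by rewrite /xstar eQ eK.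
- by apply: ae_mono H1 => w hw Ow; rewrite eK; exact: hw.
Qed.

Theorem proposition5 (R : realType) (mu sigma rho : R) :
  0 < mu -> 0 < sigma -> Num.sqrt 3 * sigma <= mu -> 0 < rho < 1 ->
  (forall (xW xP : R * R * R) (delta : R -> R),
     Optimal mu sigma rho xW xP delta <->
     exists D : R,
       [/\ Num.sqrt 3 * sigma * (2 - rho) / 4 <= D <= Num.sqrt 3 * sigma,
           xW = xstar sigma rho D /\ xP = xstar sigma rho D,
           measurable_fun (Omega mu sigma) delta,
           (forall w, Omega mu sigma w -> 0 <= delta w <= D) &
           {ae @lebesgue_measure R, forall w, Omega mu sigma w ->
              delta w = (if Kstar sigma rho D <= price mu rho w then D else 0)}]) /\
  (forall (xW xP : R * R * R) (delta : R -> R),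
     Optimal mu sigma rho xW xP delta ->
     (Var mu sigma (PiW mu rho xW) - Var mu sigma (profitW mu rho))
     + (Var mu sigma (PiP mu rho xP delta) - Var mu sigma (profitP mu rho))
     = - (3 * sigma ^+ 2 / 8) * (rho^-1 - 2^-1) ^+ 2) /\
  - (3 * sigma ^+ 2 / 8) * (rho^-1 - 2^-1) ^+ 2 < 0.
Proof.
move=> hm hs hsm hr.
have h := s3_gt0 hs.
have /andP[r0 r1] := hr.
have rn : rho != 0 by rewrite gt_eqF.
have rg1 : 1 < rho^-1 by rewrite invf_gt1.
have hkk : hh sigma rho (kk sigma rho) = - (3 * sigma ^+ 2 / 8) * (rho^-1 - 2^-1) ^+ 2.
  rewrite /hh /kk /s3.
  have t2 : Num.sqrt 3 ^+ 2 = 3 :> R by rewrite sqr_sqrtr // ler0n.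
  move: (Num.sqrt 3) t2 => t t2; rewrite -t2; move: (rho^-1) => r.
  by field.
split; [|split].
- move=> xW xP d; split; first exact: opt_star.
  move=> [D [hD [-> ->] md hb hae]].
  have F := feas_star _ _ _ _ _ hs hr hD md hb hae.
  split => // xW' xP' d' F'.
  rewrite (obj_eq _ _ _ _ _ _ hs F) (obj_eq _ _ _ _ _ _ hs F').
  have [_ _ ck] := xstar_props _ _ _ hs hr hD.
  rewrite /Kof /Dof /= ck lerD2l.
  have := hh_min sigma rho ((rho^-1 - Kof xW') * Dof xW').
  have := sqr_ge0 ((rho^-1 - Kof xW') * Dof xW' - kk sigma rho).
  move: (hh _ _ _) (hh _ _ _) (_ ^+ 2) => a b c.
  lra.
- move=> xW xP d O.
  rewrite (diff_eq _ _ _ _ _ _ hs O.1) (opt_c _ _ _ _ _ _ hs hr O).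
  exact: hkk.
- have s2 : 0 < sigma ^+ 2 by exact: exprn_gt0.
  have q2 : 0 < (rho^-1 - 2^-1) ^+ 2.
    apply: exprn_gt0; rewrite subr_gt0; apply: lt_trans rg1.
    by rewrite invf_lt1 // ltr1n.
  rewrite mulNr oppr_lt0; apply: mulr_gt0 => //.
  by apply: divr_gt0 => //; apply: mulr_gt0.
Qed.
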